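(* For any type $\sigma$, there are countably many regular families of $\sigma$-forests.
   Context: A type $\sigma$ is a finite set of relation symbols with arities; a $\sigma$-structure is a finite set with an $r$-ary relation for each symbol of arity $r$. $\mathrm{Inc}(\mathbf A)$ is the bipartite multigraph with parts $V(\mathbf A)$ and the blocks $(R,(x_1,\dots,x_r))$, $(x_1,\dots,x_r)\in R(\mathbf A)$, with one edge joining $x_i$ to the block for each $i$; $\mathbf A$ is a $\sigma$-forest if $\mathrm{Inc}(\mathbf A)$ has no cycles or parallel edges. $\mathbb F$ is the set of isomorphism classes of $\sigma$-forests, $\mathbb F_{\mathrm r}$ that of rooted $\sigma$-forests $(\mathbf A,a)$. $(\mathbf A,a)+(\mathbf B,b)$: disjoint union with $a,b$ identified as new root; $[(\mathbf A,a)]$ forgets the root. A family $\mathcal O\subseteq\mathbb F$ is regular if there are only finitely many distinct sets $\mathcal O-(\mathbf A,a)=\{(\mathbf B,b)\in\mathbb F_{\mathrm r}:[(\mathbf A,a)+(\mathbf B,b)]\in\mathcal O\}$, $(\mathbf A,a)\in\mathbb F_{\mathrm r}$. *)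

(* Defs.v *)
From mathcomp Require Import all_boot.
Set Implicit Arguments. Unset Strict Implicit. Unset Printing Implicit Defensive.

(* A type sigma: a finite set S of relation symbols with arities ar. *)
Section Sigma.
Variables (S : finType) (ar : S -> nat).

(* A finite sigma-structure, with (w.l.o.g.) universe 'I_card. *)
Record struc := Struc {
  card : nat;
  rels : forall s : S, {set (ar s).-tuple 'I_card} }.

Record rstruc := RStruc { rs : struc; rroot : 'I_(card rs) }.

Definition iso (A B : struc) : Prop :=
  exists f : 'I_(card A) -> 'I_(card B), bijective f /\
    forall (s : S) (t : (ar s).-tuple 'I_(card A)),
      (t \in rels A s) = (map_tuple f t \in rels B s).

(* Vertices of Inc(A): elements of A, and (potential) blocks (R, tuple). *)
Definition block (A : struc) := {s : S & (ar s).-tuple 'I_(card A)}.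
Definition incv (A : struc) := ('I_(card A) + block A)%type.

Definition is_block (A : struc) (b : block A) : bool :=
  tagged b \in rels A (tag b).

Definition inc_adj (A : struc) (u v : incv A) : bool :=
  match u, v with
  | inl x, inr b => is_block b && (x \in (tagged b : seq _))
  | inr b, inl x => is_block b && (x \in (tagged b : seq _))
  | _, _ => false
  end.

(* Inc(A) has parallel edges iff some block has a repeated entry. *)
Definition no_parallel_edges (A : struc) : Prop :=
  forall (s : S) (t : (ar s).-tuple 'I_(card A)), t \in rels A s -> uniq t.

Definition has_cycle (A : struc) : Prop :=
  exists p : seq (incv A), [/\ 3 <= size p, uniq p & cycle (@inc_adj A) p].

Definition is_forest (A : struc) : Prop := no_parallel_edges A /\ ~ has_cycle A.

Definition is_rforest (Aa : rstruc) : Prop := is_forest (rs Aa).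

(* C is (a representative of) [(A,a) + (B,b)]: disjoint union of A and B with
   a and b identified (root forgotten). *)
Definition is_sum (Aa Bb : rstruc) (C : struc) : Prop :=
  exists (fA : 'I_(card (rs Aa)) -> 'I_(card C))
         (fB : 'I_(card (rs Bb)) -> 'I_(card C)),
  [/\ injective fA /\ injective fB,
      fA (rroot Aa) = fB (rroot Bb),
      (forall x y, fA x = fB y -> x = rroot Aa /\ y = rroot Bb),
      (forall z, (exists x, fA x = z) \/ (exists y, fB y = z)) &
      (forall (s : S) (t : (ar s).-tuple 'I_(card C)),
         t \in rels C s <->
         (exists u, u \in rels (rs Aa) s /\ t = map_tuple fA u) \/
         (exists u, u \in rels (rs Bb) s /\ t = map_tuple fB u))].

(* A family O of sigma-forests: an isomorphism-invariant class of forests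
   (i.e. a set of isomorphism classes of sigma-forests). *)
Definition is_family (O : struc -> Prop) : Prop :=
  (forall A, O A -> is_forest A) /\
  (forall A B, iso A B -> O A -> O B).

Definition residual (O : struc -> Prop) (Aa : rstruc) : rstruc -> Prop :=
  fun Bb => is_rforest Bb /\ exists C, is_sum Aa Bb C /\ O C.

Definition regular (O : struc -> Prop) : Prop :=
  exists (n : nat) (L : 'I_n -> rstruc -> Prop),
    forall Aa, is_rforest Aa ->
      exists i : 'I_n, forall Bb, residual O Aa Bb <-> L i Bb.
End Sigma.

(* Main.v *)
Require Import Defs.
From mathcomp Require Import all_boot.
From Stdlib Require Import ClassicalEpsilon FunctionalExtensionality.
Import Defs.
Set Implicit Arguments. Unset Strict Implicit. Unset Printing Implicit Defensive.
Section P1.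
Variables (S : finType) (ar : S -> nat).
Local Notation struc := (struc ar).
Local Notation rstruc := (rstruc ar).

Definition pb (P : Prop) : bool := if excluded_middle_informative P then true else false.
Lemma pbP P : reflect P (pb P).
Proof. rewrite /pb; case: excluded_middle_informative => h; constructor => //. Qed.
Lemma pb_eq (P Q : Prop) : (P <-> Q) -> pb P = pb Q.
Proof. move=> [h1 h2]; apply/idP/idP => /pbP h; apply/pbP; auto. Qed.

Definition ihom (B A : struc) (f : 'I_(card B) -> 'I_(card A)) :=
  injective f /\ forall s u, u \in rels B s -> map_tuple f u \in rels A s.

Lemma path_hom (T T' : Type) (e : rel T) (e' : rel T') (h : T -> T') :
  (forall u v, e u v -> e' (h u) (h v)) ->
  forall x p, path e x p -> path e' (h x) (map h p).
Proof. move=> he x p; elim: p x => //= y p IH x /andP [h1 h2]; rewrite he //=; exact: IH. Qed.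

Lemma forest_ihom (B A : struc) f : @ihom B A f -> is_forest A -> is_forest B.
Proof.
move=> [finj fh] [npA ncA]; split.
  move=> s t /fh /npA; by rewrite map_inj_uniq.
move=> [p [sz up cp]]; apply: ncA.
pose phi (v : incv B) : incv A := match v with
  | inl x => inl (f x)
  | inr b => inr (Tagged (fun s => (ar s).-tuple 'I_(card A)) (map_tuple f (tagged b))) end.
have phinj : injective phi.
  move=> [x|[s1 u1]] [y|[s2 u2]] //=.
  - by move=> [] /finj ->.
  - case=> e; subst s2 => /(inj_map finj) e.
    by congr (inr (existT _ _ _)); apply: val_inj.
have phadj : forall u v, inc_adj u v -> inc_adj (phi u) (phi v).
  move=> [x|[s u]] [y|[s' u']] //=; rewrite /is_block /=.
  - by move=> /andP [/fh -> h]; rewrite (mem_map finj).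
  - by move=> /andP [/fh -> h]; rewrite (mem_map finj).
exists (map phi p); split.
- by rewrite size_map.
- by rewrite (map_inj_uniq phinj).
- move: cp; case: p {sz up} => //= x p; rewrite -map_rcons; exact: path_hom.
Qed.
End P1.
Section P2.
Variables (S : finType) (ar : S -> nat).
Local Notation struc := (struc ar).
Local Notation rstruc := (rstruc ar).

Definition ptS : struc := @Struc _ ar 1 (fun _ => set0).
Definition ptr : rstruc := @RStruc _ ar ptS ord0.

Definition nmap n (T : Type) (f : 'I_n -> T) (d : T) (x : nat) : T :=
  if insub x is Some o then f o else d.
Lemma nmapE n T (f : 'I_n -> T) d (o : 'I_n) : nmap f d o = f o.
Proof. by rewrite /nmap valK. Qed.
Lemma nmapE' n T (f : 'I_n -> T) d (x : nat) (h : x < n) : nmap f d x = f (Ordinal h).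
Proof. by rewrite -(nmapE f d (Ordinal h)). Qed.

Section CG.
Variables (Z : struc) (J : finType) (F : J -> rstruc) (att : J -> option 'I_(card Z)).
Local Notation cd j := (card (rs (F j))).
Local Notation rt j := (nat_of_ord (rroot (F j))).

Record CGrel (C : struc) (gZ : 'I_(card Z) -> 'I_(card C)) (gB : J -> nat -> 'I_(card C)) : Prop := {
  cg1 : injective gZ;
  cg2 : forall j x y, x < cd j -> y < cd j -> gB j x = gB j y -> x = y;
  cg3 : forall j x z, x < cd j -> (gB j x = gZ z <-> x = rt j /\ att j = Some z);
  cg4 : forall j k x y, j != k -> x < cd j -> y < cd k -> gB j x = gB k y ->
        [/\ att j = att k, att j != None, x = rt j & y = rt k];
  cg5 : forall v, (exists z, gZ z = v) \/ (exists j x, x < cd j /\ gB j x = v);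
  cg6 : forall s t, t \in rels C s <->
       (exists u, u \in rels Z s /\ t = map_tuple gZ u) \/
       (exists j (u : (ar s).-tuple 'I_(cd j)), u \in rels (rs (F j)) s /\
                 t = map_tuple (fun x => gB j (val x)) u) }.

Lemma CG_UP C gZ gB (E : struc) (hZ : 'I_(card Z) -> 'I_(card E)) (hB : J -> nat -> 'I_(card E)) :
  @CGrel C gZ gB -> (forall j a, att j = Some a -> hB j (rt j) = hZ a) ->
  exists phi : 'I_(card C) -> 'I_(card E),
    (forall z, phi (gZ z) = hZ z) /\ (forall j x, x < cd j -> phi (gB j x) = hB j x).
Proof.
move=> [i1 i2 i3 i4 i5 i6] hc.
have H : forall v, exists w, (forall z, gZ z = v -> w = hZ z) /\
          (forall j x, x < cd j -> gB j x = v -> w = hB j x).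
  move=> v; case: (i5 v) => [[z <-]|[j [x [xl <-]]]].
  - exists (hZ z); split; first by move=> z' /i1 ->.
    by move=> j x xl /(i3 _ _ _ xl) [-> /hc ->].
  - exists (hB j x); split.
      by move=> z /esym /(i3 _ _ _ xl) [-> /hc ->].
    move=> k y yl e; case: (eqVneq j k) => [ejk|ne].
      by subst k; rewrite (i2 _ _ _ xl yl (esym e)).
    have [e1 e2 e3 e4] := i4 _ _ _ _ ne xl yl (esym e).
    move: e2; case ea: (att j) => [a|] // _.
    by rewrite e3 e4 (hc _ _ ea) (hc k a) // -e1.
exists (fun v => proj1_sig (constructive_indefinite_description _ (H v))); split.
- move=> z; case: constructive_indefinite_description => w [h _] /=; exact: h.
- move=> j x xl; case: constructive_indefinite_description => w [_ h] /=; exact: h.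
Qed.

Local Notation TG := {j : J & 'I_(cd j)}.
Local Notation TT := ('I_(card Z) + TG)%type.
Definition nf (v : TT) : TT :=
  match v with
  | inl z => inl z
  | inr p => if att (tag p) is Some a then (if val (tagged p) == rt (tag p) then inl a else inr p)
             else inr p
  end.
Definition KK := nf @: [set: TT].
Definition ix (v : TT) : 'I_#|KK| := enum_rank_in (imset_f nf (in_setT v) : nf v \in KK) (nf v).
Lemma ixK v : enum_val (ix v) = nf v.
Proof. by rewrite /ix enum_rankK_in // imset_f. Qed.
Lemma ix_eq v w : (ix v = ix w) <-> (nf v = nf w).
Proof. split; first by move=> e; rewrite -!ixK e. by move=> e; apply: enum_val_inj; rewrite !ixK. Qed.

Definition cgZ (z : 'I_(card Z)) : 'I_#|KK| := ix (inl z).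
Definition cgB (j : J) : nat -> 'I_#|KK| :=
  nmap (fun o : 'I_(cd j) => ix (inr (Tagged (fun j => 'I_(cd j)) o)))
       (ix (inr (Tagged (fun j => 'I_(cd j)) (rroot (F j))))).
Definition cgC : struc := @Struc _ ar #|KK| (fun s =>
  [set t | [exists u : (ar s).-tuple 'I_(card Z), (u \in rels Z s) && (t == map_tuple cgZ u)] ||
           [exists j, [exists u : (ar s).-tuple 'I_(cd j),
               (u \in rels (rs (F j)) s) && (t == map_tuple (fun x => cgB j (val x)) u)]]]).

Lemma CG_ex : @CGrel cgC cgZ cgB.
Proof.
split.
- by move=> z z' /ix_eq [].
- move=> j x y xl yl; rewrite /cgB !nmapE' => /ix_eq /=.
  case: (att j) => [a|]; last by case.
  case: eqP => ex; case: eqP => ey //; first by rewrite ex ey.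
  by case.
- move=> j x z xl; rewrite /cgB /cgZ nmapE' ix_eq /=.
  case ea: (att j) => [a|]; last by split => // [[_ ]].
  case: eqP => ex /=; first by split; [case=> ->| case=> _ [->]].
  by split => // [[]].
- move=> j k x y ne xl yl; rewrite /cgB !nmapE' => /ix_eq /=.
  case ea: (att j) => [a|]; case eb: (att k) => [b|];
    do ?[case: eqP => ex]; do ?[case: eqP => ey] => //=;
    do ?[by case=> e; move: ne; rewrite e eqxx];
    do ?[by move=> [] e; split].
  by move=> [] ->; split.
- move=> v; have : enum_val v \in KK by exact: enum_valP.
  case/imsetP => w _ ew.
  have -> : v = ix w by apply: enum_val_inj; rewrite ixK.
  case: w ew => [z|[j o]] _; first by left; exists z.
  by right; exists j, o; split => //; rewrite /cgB nmapE.
- move=> s t; rewrite inE; split.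
  + case/orP => [/existsP [u /andP [h /eqP ->]]|/existsP [j /existsP [u /andP [h /eqP ->]]]].
      by left; exists u.
    by right; exists j, u.
  + case=> [[u [h ->]]|[j [u [h ->]]]]; apply/orP.
      by left; apply/existsP; exists u; rewrite h eqxx.
    by right; apply/existsP; exists j; apply/existsP; exists u; rewrite h eqxx.
Qed.

Lemma CG_exists : exists C gZ gB, @CGrel C gZ gB.
Proof. exists cgC, cgZ, cgB; exact: CG_ex. Qed.

End CG.
End P2.
Section P3.
Variables (S : finType) (ar : S -> nat).
Local Notation struc := (struc ar).
Local Notation rstruc := (rstruc ar).

Lemma is_sum_sym (A B : rstruc) C : is_sum A B C -> is_sum B A C.
Proof.
move=> [fA [fB [[iA iB] r ov cv fc]]]; exists fB, fA; split => //.
- by move=> x y /esym /ov [-> ->].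
- by move=> z; case: (cv z); [right|left].
- by move=> s t; rewrite fc; split; case; [right|left|right|left].
Qed.

Section CGL.
Variables (Z : struc) (J : finType) (F : J -> rstruc) (att : J -> option 'I_(card Z)).
Local Notation cd j := (card (rs (F j))).
Local Notation rt j := (nat_of_ord (rroot (F j))).

Definition upd (G : J -> rstruc) (m : J) (Q : rstruc) : J -> rstruc :=
  fun j => if j == m then Q else G j.

Lemma CG_pull C gZ gB m R hZ hB :
  @CGrel _ _ Z J F att C gZ gB -> @CGrel _ _ Z J (upd F m (ptr ar)) att R hZ hB ->
  is_sum (F m) (RStruc (hB m 0)) C.
Proof.
move=> HC HR.
have updm : upd F m (ptr ar) m = ptr ar by rewrite /upd eqxx.
have updj : forall j, j != m -> upd F m (ptr ar) j = F j by move=> j /negbTE ne; rewrite /upd ne.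
pose hB' j := if j == m then (fun _ : nat => gB m (rt m)) else gB j.
have [phi [phZ phB]] : exists phi : 'I_(card R) -> 'I_(card C),
    (forall z, phi (hZ z) = gZ z) /\
    (forall j x, x < card (rs (upd F m (ptr ar) j)) -> phi (hB j x) = hB' j x).
  apply: (CG_UP HR) => j a ea; rewrite /hB'; case: (eqVneq j m) => [ejm|ne].
    by subst j; apply/(cg3 HC).
  by rewrite updj //; apply/(cg3 HC).
have phM : phi (hB m 0) = gB m (rt m) by rewrite phB ?updm // /hB' eqxx.
have phJ : forall j x, j != m -> x < cd j -> phi (hB j x) = gB j x.
  by move=> j x ne xl; rewrite phB ?updj // /hB' (negbTE ne).
have hBroot : forall j a, j != m -> att j = Some a -> hB j (rt j) = hZ a.
  move=> j a ne ea; apply/(cg3 HR); first by rewrite updj.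
  by rewrite updj.
have hBm : forall a, att m = Some a -> hB m 0 = hZ a.
  by move=> a ea; apply/(cg3 HR); rewrite ?updm.
have LZ : forall v z, phi v = gZ z -> v = hZ z.
  move=> v z; case: (cg5 HR v) => [[z' <-]|[j [x [xl <-]]]].
    by rewrite phZ => /(cg1 HC) ->.
  case: (eqVneq j m) => [ejm|ne].
    subst j; move: xl; rewrite updm /= ltnS leqn0 => /eqP ->; rewrite phM.
    by move/(cg3 HC) => [//|_ ea]; rewrite (hBm _ ea).
  move: (xl); rewrite updj // => xl'; rewrite phJ //.
  by move/(cg3 HC) => [//|-> ea]; rewrite (hBroot _ _ ne ea).
have LM : forall v, phi v = gB m (rt m) -> v = hB m 0.
  move=> v; case: (cg5 HR v) => [[z <-]|[j [x [xl <-]]]].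
    by rewrite phZ => /esym /(cg3 HC) [//|_ ea]; rewrite (hBm _ ea).
  case: (eqVneq j m) => [ejm|ne].
    by subst j; move: xl; rewrite updm /= ltnS leqn0 => /eqP ->.
  move: (xl); rewrite updj // => xl'; rewrite phJ // => e.
  have [e1 e2 e3 e4] := cg4 HC ne xl' (ltn_ord _) e.
  move: e2; case ea: (att j) => [a|] // _.
  by rewrite e3 (hBroot _ _ ne ea) (hBm a) // -e1.
have LB : forall v j x, j != m -> x < cd j -> phi v = gB j x -> v = hB j x.
  move=> v j x ne xl; case: (cg5 HR v) => [[z <-]|[k [y [yl <-]]]].
    by rewrite phZ => /esym /(cg3 HC) [//|-> ea]; rewrite (hBroot _ _ ne ea).
  case: (eqVneq k m) => [ekm|nk].
    subst k; move: yl; rewrite updm /= ltnS leqn0 => /eqP ->; rewrite phM => e.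
    have [e1 e2 e3 e4] := cg4 HC ne xl (ltn_ord _) (esym e).
    move: e2; case ea: (att j) => [a|] // _.
    by rewrite e3 (hBroot _ _ ne ea) (hBm a) // -e1.
  move: (yl); rewrite updj // => yl'; rewrite phJ // => e.
  case: (eqVneq k j) => [ekj|nkj].
    by subst k; rewrite (cg2 HC yl' xl e).
  have [e1 e2 e3 e4] := cg4 HC nkj yl' xl e.
  move: e2; case ea: (att k) => [a|] // _.
  by rewrite e3 e4 (hBroot _ _ nk ea) (hBroot j a) // -e1.
have rtM : forall x, x < cd m -> forall v, gB m x = phi v -> x = rt m.
  move=> x xl v; case: (cg5 HR v) => [[z <-]|[k [y [yl <-]]]].
    by rewrite phZ => /(cg3 HC) [//|-> _].
  case: (eqVneq k m) => [ekm|nk].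
    subst k; move: yl; rewrite updm /= ltnS leqn0 => /eqP ->; rewrite phM.
    by move/(cg2 HC) => -> //.
  move: (yl); rewrite updj // => yl'; rewrite phJ // => e.
  by have [] := cg4 HC nk yl' xl (esym e).
exists (fun x : 'I_(cd m) => gB m x), phi; split.
- split; first by move=> x y /(cg2 HC) e; apply: val_inj; apply: e.
  move=> v1 v2 e; case: (cg5 HR v2) => [[z ez]|[k [y [yl ey]]]].
    by rewrite -ez; apply: LZ; rewrite e -ez phZ.
  case: (eqVneq k m) => [ekm|nk].
    subst k; move: yl; rewrite updm /= ltnS leqn0 => /eqP y0; subst y.
    by rewrite -ey; apply: LM; rewrite e -ey phM.
  move: (yl); rewrite updj // => yl'.
  by rewrite -ey; apply: (LB _ _ _ nk yl'); rewrite e -ey phJ.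
- by rewrite /= phM.
- move=> x v e; have ex := rtM _ (ltn_ord x) _ e; split; first by apply: val_inj.
  by apply: LM; rewrite -e ex.
- move=> z; case: (cg5 HC z) => [[a <-]|[j [x [xl <-]]]].
    by right; exists (hZ a); rewrite phZ.
  case: (eqVneq j m) => [ejm|ne].
    by subst j; left; exists (Ordinal xl).
  by right; exists (hB j x); rewrite phJ.
- move=> s t; rewrite (cg6 HC); split.
  + case=> [[u [hu ->]]|[j [u [hu ->]]]].
      right; exists (map_tuple hZ u); split.
        by apply/(cg6 HR); left; exists u.
      by apply: val_inj; rewrite /= -map_comp; apply: eq_map => x /=; rewrite phZ.
    case: (eqVneq j m) => [ejm|ne].
      by subst j; left; exists u.
    right; exists (map_tuple (fun x => hB j (val x)) u); split.
      apply/(cg6 HR); right; exists j.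
      move: (updj _ ne) => ej.
      rewrite ej; by exists u.
    apply: val_inj; rewrite /= -map_comp; apply: eq_map => x /=; rewrite phJ //.
  + case=> [[u [hu ->]]|[u [hu ->]]].
      by right; exists m, u.
    case/(cg6 HR): hu => [[u0 [hu0 ->]]|[j [u0 [hu0 ->]]]].
      left; exists u0; split => //.
      by apply: val_inj; rewrite /= -map_comp; apply: eq_map => x /=; rewrite phZ.
    case: (eqVneq j m) => [ejm|ne].
      subst j; move: u0 hu0; rewrite updm => u0; by rewrite in_set0.
    right; exists j; move: u0 hu0; rewrite (updj _ ne) => u0 hu0; exists u0; split => //.
    apply: val_inj; rewrite /= -map_comp; apply: eq_map => x /=; rewrite phJ //.
Qed.

End CGL.
End P3.
Section P3b.
Variables (S : finType) (ar : S -> nat).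
Local Notation struc := (struc ar).
Local Notation rstruc := (rstruc ar).
Variables (Z : struc) (J : finType) (F : J -> rstruc) (att : J -> option 'I_(card Z)).
Local Notation cd j := (card (rs (F j))).
Local Notation rt j := (nat_of_ord (rroot (F j))).

Lemma CG_push R hZ hB m (Q : rstruc) E :
  F m = ptr ar -> @CGrel _ _ Z J F att R hZ hB ->
  is_sum Q (RStruc (hB m 0)) E ->
  exists gZ gB, @CGrel _ _ Z J (upd F m Q) att E gZ gB.
Proof.
move=> Fm HR [fA [fB [[iA iB] r ov cv fc]]].
have updm : upd F m Q m = Q by rewrite /upd eqxx.
have updj : forall j, j != m -> upd F m Q j = F j by move=> j /negbTE ne; rewrite /upd ne.
have cdm : cd m = 1 by rewrite Fm.
have c0 : 0 < cd m by rewrite cdm.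
have hBm : forall a, att m = Some a -> hB m 0 = hZ a.
  by move=> a ea; apply/(cg3 HR); rewrite ?Fm.
have hBmi : forall a, hB m 0 = hZ a -> att m = Some a.
  by move=> a /(cg3 HR); rewrite Fm => -[].
pose gB j := if j == m then nmap fA (fB (hB m 0)) else (fun x => fB (hB j x)).
have gBm : forall x : 'I_(card (rs Q)), gB m x = fA x by move=> x; rewrite /gB eqxx nmapE.
have gBj : forall j x, j != m -> gB j x = fB (hB j x) by move=> j x /negbTE ne; rewrite /gB ne.
exists (fun z => fB (hZ z)), gB; split.
- by move=> z z' /iB /(cg1 HR).
- move=> j x y; case: (eqVneq j m) => [ejm|ne].
    subst j; rewrite updm => xl yl; rewrite -[x]/(val (Ordinal xl)) -[y]/(val (Ordinal yl)).
    by rewrite !gBm => /iA ->.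
  rewrite updj // !gBj // => xl yl /iB; exact: (cg2 HR).
- move=> j x z; case: (eqVneq j m) => [ejm|ne].
    subst j; rewrite updm => xl; rewrite -[x]/(val (Ordinal xl)) gBm; split.
      by move/ov => [-> /esym /hBmi].
    move=> [ex ea]; have -> : Ordinal xl = rroot Q by apply: val_inj.
    by rewrite r (hBm _ ea).
  rewrite updj // gBj // => xl; split; first by move/iB/(cg3 HR); apply.
  by move=> h; congr fB; apply/(cg3 HR).
- move=> j k x y ne.
  case: (eqVneq j m) => [ejm|nj].
    subst j; rewrite updm updj 1?eq_sym // => xl yl.
    rewrite -[x]/(val (Ordinal xl)) gBm gBj 1?eq_sym // => /ov [ex /esym e].
    have ne' : k != m by rewrite eq_sym.
    have [e1 e2 e3 e4] := cg4 HR ne' yl c0 (esym e).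
    by split => //; rewrite -?e1 // -ex.
  case: (eqVneq k m) => [ekm|nk].
    subst k; rewrite updm updj // => xl yl.
    rewrite -[y]/(val (Ordinal yl)) gBm gBj // => /esym /ov [ey e].
    have [e1 e2 e3 e4] := cg4 HR nj xl c0 e.
    by split => //; rewrite ey.
  rewrite !updj // !gBj // => xl yl /iB e; exact: (cg4 HR ne xl yl e).
- move=> v; case: (cv v) => [[x <-]|[y <-]].
    by right; exists m, x; rewrite updm gBm.
  case: (cg5 HR y) => [[z <-]|[j [x [xl <-]]]]; first by left; exists z.
  case: (eqVneq j m) => [ejm|ne].
    subst j; move: xl; rewrite cdm ltnS leqn0 => /eqP ->; rewrite -r.
    by right; exists m, (rroot Q); rewrite updm gBm.
  by right; exists j, x; rewrite updj // gBj.
- move=> s t; rewrite fc; split.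
  + case=> [[u [hu ->]]|[u [hu ->]]].
      right; exists m; rewrite updm; exists u; split => //.
      by apply: val_inj; apply: eq_map => x; rewrite /= gBm.
    case/(cg6 HR): hu => [[u0 [hu0 ->]]|[j [u0 [hu0 ->]]]].
      left; exists u0; split => //; apply: val_inj; rewrite /= -map_comp //.
    case: (eqVneq j m) => [ejm|ne].
      by subst j; move: u0 hu0; rewrite Fm => u0; rewrite in_set0.
    right; exists j; rewrite updj //; exists u0; split => //.
    by apply: val_inj; rewrite /= -map_comp; apply: eq_map => x /=; rewrite gBj.
  + case=> [[u [hu ->]]|[j [u [hu ->]]]].
      right; exists (map_tuple hZ u); split; first by apply/(cg6 HR); left; exists u.
      by apply: val_inj; rewrite /= -map_comp.
    case: (eqVneq j m) => [ejm|ne].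
      subst j; move: u hu; rewrite updm => u hu; left; exists u; split => //.
      by apply: val_inj; apply: eq_map => x; rewrite /= gBm.
    move: u hu; rewrite updj // => u hu.
    right; exists (map_tuple (fun x => hB j (val x)) u); split.
      by apply/(cg6 HR); right; exists j, u.
    by apply: val_inj; rewrite /= -map_comp; apply: eq_map => x /=; rewrite gBj.
Qed.
End P3b.
Section P3c.
Variables (S : finType) (ar : S -> nat).
Local Notation struc := (struc ar).
Local Notation rstruc := (rstruc ar).
Variables (Z : struc) (J : finType) (F : J -> rstruc) (att : J -> option 'I_(card Z)).

Definition extF (X : rstruc) : option J -> rstruc := fun o => if o is Some j then F j else X.
Definition extA (a : 'I_(card Z)) : option J -> option 'I_(card Z) :=
  fun o => if o is Some j then att j else Some a.

Lemma CG_padd C gZ gB a :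
  @CGrel _ _ Z J F att C gZ gB ->
  @CGrel _ _ Z _ (extF (ptr ar)) (extA a) C gZ (fun o => if o is Some j then gB j else fun _ => gZ a).
Proof.
move=> H; split.
- exact: (cg1 H).
- by move=> [j|] x y /=; [exact: (cg2 H)|rewrite !ltnS !leqn0 => /eqP -> /eqP ->].
- move=> [j|] x z /=; first exact: (cg3 H).
  rewrite ltnS leqn0 => /eqP ->; split; first by move/(cg1 H) ->.
  by case=> _ [->].
- move=> [j|] [k|] x y //= ne.
  + by apply: (cg4 H); apply: contra ne => /eqP ->.
  + rewrite ltnS leqn0 => xl /eqP -> /(cg3 H) [//|-> ->]; by split.
  + rewrite ltnS leqn0 => /eqP -> yl /esym /(cg3 H) [//|-> ->]; by split.
- move=> v; case: (cg5 H v) => [h|[j [x [xl <-]]]]; first by left.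
  by right; exists (Some j), x.
- move=> s t; rewrite (cg6 H); split.
  + case=> [h|[j [u [hu ->]]]]; first by left.
    by right; exists (Some j), u.
  + case=> [h|[[j|] [u [hu ->]]]]; first by left.
    * by right; exists j, u.
    * by move: hu; rewrite in_set0.
Qed.

Lemma upd_extF X : upd (extF X) None (ptr ar) = extF (ptr ar).
Proof. by apply: functional_extensionality => -[j|]. Qed.
Lemma upd_extF2 X : upd (upd (extF X) None (ptr ar)) None X = extF X.
Proof. by apply: functional_extensionality => -[j|]. Qed.

Lemma CG_sum C gZ gB z0 (X : rstruc) E :
  @CGrel _ _ Z J F att C gZ gB -> is_sum (RStruc (gZ z0)) X E ->
  exists gZ' gB', @CGrel _ _ Z _ (extF X) (extA z0) E gZ' gB'.
Proof.
move=> HC HE.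
have H1 := CG_padd z0 HC; rewrite -(upd_extF X) in H1.
have [gZ' [gB' H]] := CG_push (m := None) (Q := X) (E := E) (erefl _) H1 (is_sum_sym HE).
by rewrite upd_extF2 in H; exists gZ', gB'.
Qed.

Lemma CG_unsum C hZ hB z0 (X : rstruc) E gZ gB :
  @CGrel _ _ Z J F att C hZ hB -> @CGrel _ _ Z _ (extF X) (extA z0) E gZ gB ->
  is_sum (RStruc (hZ z0)) X E.
Proof.
move=> HC HE.
have H1 := CG_padd z0 HC; rewrite -(upd_extF X) in H1.
exact: (is_sum_sym (CG_pull HE H1)).
Qed.
End P3c.
Section P4.
Variables (S : finType) (ar : S -> nat).
Local Notation struc := (struc ar).
Local Notation rstruc := (rstruc ar).
Variable O : struc -> Prop.

Definition SE (A Q : rstruc) := forall X : rstruc,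
  (exists E, is_sum A X E /\ O E) <-> (exists E, is_sum Q X E /\ O E).

Lemma SE_refl A : SE A A. Proof. by []. Qed.
Lemma SE_sym A B : SE A B -> SE B A. Proof. by move=> h X; rewrite h. Qed.

Section In.
Variables (Z : struc) (J : finType) (att : J -> option 'I_(card Z)).

Lemma CG_gen (F : J -> rstruc) E gZ gB m Q :
  @CGrel _ _ Z J F att E gZ gB -> O E -> SE (F m) Q ->
  exists E' gZ' gB', @CGrel _ _ Z J (upd F m Q) att E' gZ' gB' /\ O E'.
Proof.
move=> HE OE hs.
have [R [hZ [hB HR]]] := @CG_exists _ _ Z J (upd F m (ptr ar)) att.
have HS := CG_pull HE HR.
have [E'' [HS' OE'']] : exists E, is_sum Q (RStruc (hB m 0)) E /\ O E.
  by apply/hs; exists E.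
have Fm : upd F m (ptr ar) m = ptr ar by rewrite /upd eqxx.
have [gZ' [gB' H]] := CG_push Fm HR HS'.
have e : upd (upd F m (ptr ar)) m Q = upd F m Q.
  by apply: functional_extensionality => j; rewrite /upd; case: eqP.
by rewrite e in H; exists E'', gZ', gB'.
Qed.

Lemma CG_all (F F' : J -> rstruc) E gZ gB :
  (forall j, SE (F j) (F' j)) ->
  @CGrel _ _ Z J F att E gZ gB -> O E ->
  exists E' gZ' gB', @CGrel _ _ Z J F' att E' gZ' gB' /\ O E'.
Proof.
move=> hs HE OE.
suff : forall l : seq J, exists E' gZ' gB',
    @CGrel _ _ Z J (fun j => if j \in l then F' j else F j) att E' gZ' gB' /\ O E'.
  move/(_ (enum J)) => [E' [gZ' [gB' [H O']]]].
  have e : (fun j => if j \in enum J then F' j else F j) = F'.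
    by apply: functional_extensionality => j; rewrite mem_enum.
  by rewrite e in H; exists E', gZ', gB'.
elim=> [|x l [E' [gZ' [gB' [H O']]]]].
  have e : (fun j => if j \in [::] then F' j else F j) = F.
    by apply: functional_extensionality.
  by rewrite e; exists E, gZ, gB.
have hx : SE ((fun j => if j \in l then F' j else F j) x) (F' x).
  by case: (x \in l) => //; exact: SE_refl.
have [E2 [gZ2 [gB2 [H2 O2]]]] := CG_gen H O' hx.
have e : upd (fun j => if j \in l then F' j else F j) x (F' x) =
         (fun j => if j \in x :: l then F' j else F j).
  by apply: functional_extensionality => j; rewrite /upd inE; case: eqP => [->|].
by rewrite e in H2; exists E2, gZ2, gB2.
Qed.

End In.
Variables (Z : struc) (J : finType) (att : J -> option 'I_(card Z)).

Lemma CG_cong (F F' : J -> rstruc) C gZ gB C' gZ' gB' z0 :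
  (forall j, SE (F j) (F' j)) ->
  @CGrel _ _ Z J F att C gZ gB -> @CGrel _ _ Z J F' att C' gZ' gB' ->
  SE (RStruc (gZ z0)) (RStruc (gZ' z0)).
Proof.
suff : forall (F F' : J -> rstruc) C gZ gB C' gZ' gB', (forall j, SE (F j) (F' j)) ->
  @CGrel _ _ Z J F att C gZ gB -> @CGrel _ _ Z J F' att C' gZ' gB' ->
  forall X, (exists E, is_sum (RStruc (gZ z0)) X E /\ O E) ->
            (exists E, is_sum (RStruc (gZ' z0)) X E /\ O E).
  move=> h hs HC HC' X; split; first exact: (h _ _ _ _ _ _ _ _ hs HC HC').
  by apply: (h _ _ _ _ _ _ _ _ _ HC' HC) => j; apply: SE_sym.
move=> {}F {}F' {}C {}gZ {}gB {}C' {}gZ' {}gB' hs HC HC' X [E [HS OE]].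
have [g1 [g2 HE]] := CG_sum HC HS.
have hs' : forall o, SE (extF F X o) (extF F' X o) by move=> [j|] //=; exact: SE_refl.
have [E' [h1 [h2 [HE' OE']]]] := CG_all hs' HE OE.
by exists E'; split => //; exact: (CG_unsum HC' HE').
Qed.
End P4.
Section P5.
Variables (S : finType) (ar : S -> nat).
Local Notation struc := (struc ar).
Local Notation rstruc := (rstruc ar).

Definition nulS (s0 : S) : struc := @Struc _ ar 1 (fun s => if s == s0 then setT else set0).
Definition starS (s0 : S) : struc := @Struc _ ar (ar s0)
  (fun s => [set u | (s == s0) && (map val (val u) == iota 0 (ar s0))]).

Definition shape := (S + {s : S & 'I_(ar s)} + bool)%type.
Record shp := Shp { sZ : rstruc; snp : nat; satt : 'I_snp -> option 'I_(card (rs sZ)) }.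
Definition shape_of (k : shape) : shp :=
  match k with
  | inl (inl s) => @Shp (@RStruc _ ar (nulS s) ord0) 1 (fun _ => Some ord0)
  | inl (inr p) => @Shp (@RStruc _ ar (starS (tag p)) (tagged p)) (ar (tag p)) (fun j => Some j)
  | inr true => @Shp (ptr ar) 0 (fun _ => None)
  | inr false => @Shp (ptr ar) 2 (fun j => if val j == 0 then Some ord0 else None)
  end.

Inductive term := Node (k : shape) (ts : 'I_(snp (shape_of k)) -> term).

Fixpoint Den (t : term) (A : rstruc) {struct t} : Prop :=
  match t with
  | Node k ts => exists B : 'I_(snp (shape_of k)) -> rstruc, (forall j, Den (ts j) (B j)) /\
      exists gZ gB, @CGrel _ _ (rs (sZ (shape_of k))) _ B (@satt (shape_of k)) (rs A) gZ gB /\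
                    rroot A = gZ (rroot (sZ (shape_of k)))
  end.

Definition subS (A : struc) (V : {set 'I_(card A)}) : struc :=
  @Struc _ ar #|V| (fun s => [set u | map_tuple enum_val u \in rels A s]).

Definition msr (A : struc) := card A + \sum_(s : S) #|rels A s|.

Lemma subS_card_rels A V s : #|rels (@subS A V) s| <= #|rels A s|.
Proof.
have inj : injective (fun u : (ar s).-tuple 'I_#|V| => map_tuple enum_val u).
  by move=> u v /(congr1 val) /= /(inj_map enum_val_inj) /val_inj.
rewrite -(card_imset _ inj); apply: subset_leq_card; apply/subsetP => x /imsetP [u].
by rewrite inE => h ->.
Qed.

Section Part.
Variables (A : struc) (R' : forall s, {set (ar s).-tuple 'I_(card A)}).
Variables (Z : struc) (gZ : 'I_(card Z) -> 'I_(card A)) (J : finType).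
Variables (V : J -> {set 'I_(card A)}) (r : J -> 'I_(card A)) (att : J -> option 'I_(card Z)).
Local Notation A' := (@Struc _ ar (card A) R').
Hypotheses (h1 : injective gZ) (h2 : forall j, r j \in V j)
  (h3 : forall j k x, j != k -> x \in V j -> x \in V k -> False)
  (h4 : forall j x z, x \in V j -> (x = gZ z <-> x = r j /\ att j = Some z))
  (h5 : forall v, (exists z, gZ z = v) \/ (exists j, v \in V j))
  (h6 : forall s t, t \in rels A s <-> (exists u, u \in rels Z s /\ t = map_tuple gZ u) \/ t \in R' s)
  (h7 : forall s t, t \in R' s -> exists j, forall x, x \in (t : seq _) -> x \in V j).

Definition pieces (j : J) : rstruc := @RStruc _ ar (@subS A' (V j)) (enum_rank_in (h2 j) (r j)).

Lemma CG_part : exists gB, @CGrel _ _ Z J pieces att A gZ gB.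
Proof.
exists (fun j => nmap (fun o : 'I_#|V j| => enum_val o) (r j)); split => //.
- move=> j x y xl yl; rewrite !nmapE' => /enum_val_inj; by case.
- move=> j x z xl.
  have hv : enum_val (Ordinal xl : 'I_#|V j|) \in V j by exact: enum_valP.
  rewrite nmapE' (h4 _ hv); split.
    case=> e ->; split => //; have := enum_valK_in (h2 j) (Ordinal xl); by rewrite e /pieces /= => ->.
  case=> e ->; split => //.
  have eo : (Ordinal xl : 'I_#|V j|) = enum_rank_in (h2 j) (r j) by apply: val_inj.
  by rewrite eo enum_rankK_in.
- move=> j k x y ne xl yl; rewrite !nmapE' => e; exfalso.
  have hv : enum_val (Ordinal xl : 'I_#|V j|) \in V j by exact: enum_valP.
  have hw : enum_val (Ordinal yl : 'I_#|V k|) \in V k by exact: enum_valP.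
  by apply: (h3 ne hv); rewrite e.
- move=> v; case: (h5 v) => [h|[j hj]]; first by left.
  right; exists j, (enum_rank_in hj v); split => //.
  by rewrite nmapE enum_rankK_in.
- move=> s t; rewrite h6; split.
  + case=> [h|ht]; first by left.
    right; have [j hj] := h7 ht; exists j.
    exists (map_tuple (enum_rank_in (h2 j)) t).
    have et : map_tuple (fun x => nmap (fun o : 'I_#|V j| => enum_val o) (r j) (val x))
                (map_tuple (enum_rank_in (h2 j)) t) = t.
      apply: val_inj; rewrite /= -map_comp -[RHS]map_id; apply/eq_in_map => x xt /=.
      by rewrite nmapE enum_rankK_in // hj.
    split => //; rewrite inE /=.
    suff -> : map_tuple enum_val (map_tuple (enum_rank_in (h2 j)) t) = t by [].
    by rewrite -[RHS]et; apply: val_inj; apply: eq_map => x /=; rewrite nmapE.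
  + case=> [h|[j [u [hu ->]]]]; first by left.
    right; move: hu; rewrite inE /=.
    suff -> : map_tuple (fun x => nmap (fun o : 'I_#|V j| => enum_val o) (r j) (val x)) u =
              map_tuple enum_val u by [].
    by apply: val_inj; apply: eq_map => x /=; rewrite nmapE.
Qed.

Lemma pieces_forest j : is_forest A -> is_forest (rs (pieces j)).
Proof.
move=> hA; apply: (@forest_ihom _ _ (rs (pieces j)) A (fun o : 'I_#|V j| => enum_val o)) => //.
split; first exact: enum_val_inj.
by move=> s u; rewrite inE => h; apply/h6; right.
Qed.

Lemma pieces_msr j : msr (rs (pieces j)) <= #|V j| + \sum_(s : S) #|R' s|.
Proof.
rewrite /msr leq_add2l; apply: leq_sum => s _.
exact: (@subS_card_rels A' (V j) s).
Qed.
End Part.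
End P5.
Section P6.
Variables (S : finType) (ar : S -> nat).
Local Notation struc := (struc ar).
Local Notation rstruc := (rstruc ar).

Lemma inc_adj_sym (A : struc) : symmetric (@inc_adj _ _ A).
Proof. by move=> [x|b] [y|b']. Qed.

Lemma conn_sym (A : struc) u v : connect (@inc_adj _ _ A) u v = connect (@inc_adj _ _ A) v u.
Proof. by rewrite (sym_connect_sym (@inc_adj_sym A)). Qed.

Lemma fact_conn (A : struc) s (t : (ar s).-tuple 'I_(card A)) x y :
  t \in rels A s -> x \in (t : seq _) -> y \in (t : seq _) ->
  connect (@inc_adj _ _ A) (inl x) (inl y).
Proof.
move=> ht hx hy.
pose b : incv A := inr (Tagged (fun s => (ar s).-tuple 'I_(card A)) t).
have h1 : connect (@inc_adj _ _ A) (inl x) b by apply: connect1; rewrite /= /is_block /= ht hx.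
have h2 : connect (@inc_adj _ _ A) b (inl y) by apply: connect1; rewrite /= /is_block /= ht hy.
exact: connect_trans h1 h2.
Qed.

Lemma tuple0_eq (T : Type) n (t t' : n.-tuple T) : n = 0 -> t = t'.
Proof. move=> e; apply: val_inj; case: t => [[|? ?] /= /eqP h] //; case: t' => [[|? ?] /= /eqP h'] //; by subst. Qed.

Section Rem.
Variables (A : struc) (b0 : block A).
Definition remR (s : S) : {set (ar s).-tuple 'I_(card A)} :=
  [set u | (u \in rels A s) && (Tagged (fun s => (ar s).-tuple 'I_(card A)) u != b0)].
Definition remS : struc := @Struc _ ar (card A) remR.

Lemma adj_rem_le u v : @inc_adj _ _ remS u v -> @inc_adj _ _ A u v.
Proof.
by case: u v => [x|[s t]] [y|[s' t']] //=; rewrite /is_block /= inE => /andP [/andP [-> _] ->].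
Qed.

Lemma adj_rem u v : u != inr b0 -> v != inr b0 -> @inc_adj _ _ remS u v = @inc_adj _ _ A u v.
Proof.
case: u v => [x|[s t]] [y|[s' t']] //= h1 h2; rewrite /is_block /= inE.
  by move: h2; rewrite /eq_op /= => ->; rewrite andbT.
by move: h1; rewrite /eq_op /= => ->; rewrite andbT.
Qed.

Lemma adj_rem_b0 u : @inc_adj _ _ remS u (inr b0) = false.
Proof. by case: u => // x /=; rewrite /is_block inE taggedK eqxx andbF. Qed.

Lemma path_rem_b0 x p : path (@inc_adj _ _ remS) x p -> inr b0 \notin p.
Proof.
elim: p x => //= y p IH x /andP [h1 h2]; rewrite inE negb_or (IH _ h2) andbT.
by apply: contraTneq h1 => <-; rewrite adj_rem_b0.
Qed.
End Rem.

Lemma acyc (A : struc) s (t : (ar s).-tuple 'I_(card A)) x y :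
  is_forest A -> t \in rels A s -> x \in (t : seq _) -> y \in (t : seq _) -> x != y ->
  ~~ connect (@inc_adj _ _ (remS (Tagged (fun s => (ar s).-tuple 'I_(card A)) t))) (inl x) (inl y).
Proof.
move=> [npA ncA] ht hx hy nxy; apply/negP => /connectP [p hp ep].
pose b0 : block A := Tagged (fun s => (ar s).-tuple 'I_(card A)) t.
move: ep; case: (shortenP hp) => p' hp' up' _ ep'.
apply: ncA; exists (inr b0 :: inl x :: p'); split.
- case: p' {hp' up'} ep' => [/= [] e|]; first by rewrite e eqxx in nxy.
  by [].
- move: up' (path_rem_b0 hp') => /= up' hb.
  by rewrite up' andbT inE negb_or hb.
- rewrite /= /is_block /= ht hx /= rcons_path.
  rewrite (sub_path (@adj_rem_le A b0) hp') /=.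
  by rewrite -ep' /= /is_block ht hy.
Qed.

Lemma cover_rem (A : struc) s (t : (ar s).-tuple 'I_(card A)) c v :
  c \in (t : seq _) -> t \in rels A s ->
  connect (@inc_adj _ _ A) (inl c) v ->
  v = inr (Tagged (fun s => (ar s).-tuple 'I_(card A)) t) \/
  exists2 y, y \in (t : seq _) &
     connect (@inc_adj _ _ (remS (Tagged (fun s => (ar s).-tuple 'I_(card A)) t))) (inl y) v.
Proof.
pose b0 : block A := Tagged (fun s => (ar s).-tuple 'I_(card A)) t.
move=> hc ht /connectP [p hp ->].
pose P w := w = inr b0 \/ exists2 y, y \in (t : seq _) & connect (@inc_adj _ _ (remS b0)) (inl y) w.
have step : forall u w, P u -> @inc_adj _ _ A u w -> P w.
  move=> u w Pu huw; case: (eqVneq w (inr b0)) => [->|nw]; first by left.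
  case: (eqVneq u (inr b0)) => [eu|nu].
    subst u; case: w huw nw => [z|//] /= /andP [_ hz] _; right; exists z.
      exact: hz.
    exact: connect0.
  case: Pu => [eu|[y hy hc']]; first by rewrite eu eqxx in nu.
  right; exists y => //; apply: connect_trans hc' (connect1 _).
  by rewrite adj_rem.
suff H : forall u, P u -> path (@inc_adj _ _ A) u p -> P (last u p).
  by apply: H hp; right; exists c => //; exact: connect0.
elim: p {hp} => [|w p IH] u Pu //= /andP [h1 h2]; apply: IH h2; exact: step Pu h1.
Qed.
End P6.
Section P7.
Variables (S : finType) (ar : S -> nat).
Local Notation struc := (struc ar).
Local Notation rstruc := (rstruc ar).

Lemma mkDen (k : shape ar) (A : struc) (c : 'I_(card A)) (B : 'I_(snp (shape_of k)) -> rstruc) gZ gB :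
  @CGrel _ _ (rs (sZ (shape_of k))) _ B (@satt _ _ (shape_of k)) A gZ gB ->
  c = gZ (rroot (sZ (shape_of k))) ->
  (forall j, exists t, Den t (B j)) -> exists t, Den t (@RStruc _ ar A c).
Proof.
move=> HC ec hB.
exists (Node (fun j => proj1_sig (constructive_indefinite_description _ (hB j)))).
exists B; split; last by exists gZ, gB.
by move=> j; case: constructive_indefinite_description.
Qed.

Lemma sum_lt (f g : S -> nat) s0 : (forall s, f s <= g s) -> f s0 < g s0 ->
  \sum_(s : S) f s < \sum_(s : S) g s.
Proof.
move=> hle hlt; rewrite (bigD1 s0) // [X in _ < X](bigD1 s0) //=.
by rewrite -addSn; apply: leq_add => //; apply: leq_sum.
Qed.

Definition IHyp (n : nat) := forall (A : struc) (c : 'I_(card A)), msr A < n -> is_forest A ->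
  exists t, Den t (@RStruc _ ar A c).

Lemma dec_nul n (IH : IHyp n) A c s0 : msr A < n.+1 -> is_forest A -> ar s0 = 0 -> rels A s0 != set0 ->
  exists t, Den t (@RStruc _ ar A c).
Proof.
move=> hm hf a0 /set0Pn [w hw].
pose R' := fun s : S => (if s == s0 then set0 else rels A s) : {set (ar s).-tuple 'I_(card A)}.
pose gZ := fun _ : 'I_1 => c.
pose V := fun _ : 'I_1 => [set: 'I_(card A)].
pose r := fun _ : 'I_1 => c.
pose att := fun _ : 'I_1 => Some (ord0 : 'I_1).
have h1 : injective gZ by move=> x y _; rewrite (ord1 x) (ord1 y).
have h2 : forall j, r j \in V j by move=> j; exact: in_setT.
have h3 : forall j k x, j != k -> x \in V j -> x \in V k -> False.
  by move=> j k x; rewrite (ord1 j) (ord1 k) eqxx.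
have h4 : forall j x z, x \in V j -> (x = gZ z <-> x = r j /\ att j = Some z).
  by move=> j x z _; rewrite (ord1 z); split => [->|[->]].
have h5 : forall v, (exists z, gZ z = v) \/ (exists j, v \in V j).
  by move=> v; right; exists ord0; rewrite in_setT.
have h6 : forall s t, t \in rels A s <->
    (exists u, u \in rels (nulS ar s0) s /\ t = map_tuple gZ u) \/ t \in R' s.
  move=> s t; rewrite /R' /=; case: eqP => [es|ns].
    subst s; have et : t = w by apply: tuple0_eq.
    rewrite et hw in_set0; split => // _; left.
    exists (map_tuple (fun _ => ord0) w); split; first by rewrite in_setT.
    exact: tuple0_eq.
  split; first by right.
  by case=> [[u [h _]]|//]; rewrite in_set0 in h.
have h7 : forall s t, t \in R' s -> exists j, forall x, x \in (t : seq _) -> x \in V j.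
  by move=> s t _; exists ord0 => x _; exact: in_setT.
have [gB HCG] := CG_part (Z := nulS ar s0) h1 h2 h3 h4 h5 h6 h7.
apply: (@mkDen (inl (inl s0)) A c _ gZ gB HCG) => // j.
apply: IH; last exact: (pieces_forest h2 h6 j hf).
apply: leq_ltn_trans (pieces_msr R' h2 j) _.
rewrite /V cardsT card_ord; rewrite ltnS in hm; apply: leq_trans _ hm; rewrite /msr ltn_add2l.
apply: (sum_lt (s0 := s0)); first by move=> s; rewrite /R'; case: eqP => // _; rewrite cards0.
by rewrite /R' eqxx cards0 card_gt0; apply/set0Pn; exists w.
Qed.
End P7.
Section P7b.
Variables (S : finType) (ar : S -> nat).
Local Notation struc := (struc ar).
Local Notation rstruc := (rstruc ar).

Definition o1 : 'I_2 := Ordinal (isT : 1 < 2).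
Lemma I2 (j : 'I_2) : j = ord0 \/ j = o1.
Proof. case: j => [[|[|m]] h]; [left|right|by []]; exact: val_inj. Qed.

Lemma ar_pos (A : struc) s (t : (ar s).-tuple 'I_(card A)) :
  (forall s, ar s = 0 -> rels A s = set0) -> t \in rels A s -> 0 < ar s.
Proof. move=> h; rewrite lt0n; apply: contraTneq => e; by rewrite h // in_set0. Qed.

Lemma dec_dis n (IH : IHyp ar n) A c : msr A < n.+1 -> is_forest A ->
  (forall s, ar s = 0 -> rels A s = set0) ->
  [set x | connect (@inc_adj _ _ A) (inl c) (inl x)] != setT ->
  exists t, Den t (@RStruc _ ar A c).
Proof.
move=> hm hf hnul; set K := [set x | _] => hK.
have cK : c \in K by rewrite inE connect0.
have [v vK] : exists v, v \notin K.
  case: (pickP (fun x => x \notin K)) => [v hv|h]; first by exists v.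
  by move/eqP: hK; case; apply/setP => x; move: (h x) => /negbFE ->; rewrite in_setT.
pose R' := fun s : S => rels A s.
pose gZ := fun _ : 'I_1 => c.
pose V := fun j : 'I_2 => if val j == 0 then K else ~: K.
pose r := fun j : 'I_2 => if val j == 0 then c else v.
pose att := fun j : 'I_2 => if val j == 0 then Some (ord0 : 'I_1) else None.
have h1 : injective gZ by move=> x y _; rewrite (ord1 x) (ord1 y).
have h2 : forall j, r j \in V j.
  by move=> j; case: (I2 j) => ->; rewrite /r /V //= inE.
have h3 : forall j k x, j != k -> x \in V j -> x \in V k -> False.
  move=> j k x; case: (I2 j) => ->; case: (I2 k) => -> //=; rewrite /V /= in_setC => _;
    by case: (x \in K).
have h4 : forall j x z, x \in V j -> (x = gZ z <-> x = r j /\ att j = Some z).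
  move=> j x z; rewrite (ord1 z); case: (I2 j) => -> /=; rewrite /V /r /att /gZ /=.
    by move=> _; split => [->|[->]].
  by rewrite inE => hx; split => [e|[]] //; rewrite e cK in hx.
have h5 : forall v, (exists z, gZ z = v) \/ (exists j, v \in V j).
  move=> x; right; case hx: (x \in K); first by exists ord0; rewrite /V /= hx.
  by exists o1; rewrite /V /= inE hx.
have h6 : forall s t, t \in rels A s <->
    (exists u, u \in rels (ptS ar) s /\ t = map_tuple gZ u) \/ t \in R' s.
  move=> s t; split; first by right.
  by case=> [[u [h _]]|//]; rewrite in_set0 in h.
have h7 : forall s t, t \in R' s -> exists j, forall x, x \in (t : seq _) -> x \in V j.
  move=> s t ht; have a0 := ar_pos hnul ht.
  have yt : tnth t (Ordinal a0) \in (t : seq _) by exact: mem_tnth.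
  case hy: (tnth t (Ordinal a0) \in K).
    exists ord0 => x xt; rewrite /V /=; move: hy; rewrite !inE => hy.
    exact: connect_trans hy (fact_conn ht yt xt).
  exists o1 => x xt; rewrite /V /= inE; apply/negP => hx; move: hy hx; rewrite !inE => /negbT/negP hy hx.
  exact: hy (connect_trans hx (fact_conn ht xt yt)).
have [gB HCG] := CG_part (Z := ptS ar) h1 h2 h3 h4 h5 h6 h7.
apply: (@mkDen _ _ (inr false) A c _ gZ gB HCG) => // j.
apply: IH; last exact: (pieces_forest h2 h6 j hf).
apply: leq_ltn_trans (pieces_msr R' h2 j) _.
rewrite ltnS in hm; apply: leq_trans _ hm; rewrite /msr -addSn leq_add2r.
apply: (@leq_trans #|[set: 'I_(card A)]|); last by rewrite cardsT card_ord.
apply: proper_card; rewrite properT /V.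
case: (I2 j) => -> /=; first exact: hK.
by apply/eqP => /setP /(_ c); rewrite in_setC in_setT cK.
Qed.
End P7b.
Section P7c.
Variables (S : finType) (ar : S -> nat).
Local Notation struc := (struc ar).
Local Notation rstruc := (rstruc ar).

Lemma idx_ord (A : struc) s (t : (ar s).-tuple 'I_(card A)) y (hy : y \in (t : seq _)) :
  exists j : 'I_(ar s), tnth t j = y.
Proof.
have hi : index y t < ar s by rewrite -[X in _ < X](size_tuple t) index_mem.
by exists (Ordinal hi); rewrite (tnth_nth y) /= nth_index.
Qed.

Lemma dec_blk n (IH : IHyp ar n) A c s (t : (ar s).-tuple 'I_(card A)) :
  msr A < n.+1 -> is_forest A ->
  (forall s, ar s = 0 -> rels A s = set0) ->
  (forall x, connect (@inc_adj _ _ A) (inl c) (inl x)) ->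
  t \in rels A s -> c \in (t : seq _) ->
  exists t', Den t' (@RStruc _ ar A c).
Proof.
move=> hm hf hnul hcon ht hc.
pose b0 : block A := Tagged (fun s => (ar s).-tuple 'I_(card A)) t.
have [i ei] := idx_ord hc.
pose R' := remR b0.
pose A' := remS b0.
pose gZ := tnth t.
pose V := fun j : 'I_(ar s) => [set x | connect (@inc_adj _ _ A') (inl (tnth t j)) (inl x)].
pose r := fun j : 'I_(ar s) => tnth t j.
pose att := fun j : 'I_(ar s) => Some j.
have h1 : injective gZ by apply/tuple_uniqP; exact: (hf.1 _ _ ht).
have h2 : forall j, r j \in V j by move=> j; rewrite inE connect0.
have h3 : forall j k x, j != k -> x \in V j -> x \in V k -> False.
  move=> j k x ne; rewrite !inE => hj hk.
  have hne : tnth t j != tnth t k by apply: contra ne => /eqP /h1 ->.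
  move/negP: (acyc hf ht (mem_tnth j t) (mem_tnth k t) hne); apply.
  by apply: connect_trans hj _; rewrite conn_sym.
have h4 : forall j x z, x \in V j -> (x = gZ z <-> x = r j /\ att j = Some z).
  move=> j x z hx; split; last by move=> [-> e]; case: e => ->.
  move=> ex; case: (eqVneq z j) => [ezj|ne]; first by subst z.
  exfalso; apply: (h3 _ _ _ ne (h2 z)); by rewrite /r -/(gZ z) -ex.
have cov : forall x, exists j, x \in V j.
  move=> x; case: (cover_rem hc ht (hcon x)) => // [[y hy hyx]].
  have [j ej] := idx_ord hy; exists j; by rewrite inE ej.
have h5 : forall v, (exists z, gZ z = v) \/ (exists j, v \in V j) by move=> v; right; exact: cov.
have hstar : forall s' (t' : (ar s').-tuple 'I_(card A)),
   (exists u, u \in rels (starS ar s) s' /\ t' = map_tuple gZ u) <->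
   Tagged (fun s => (ar s).-tuple 'I_(card A)) t' = b0.
  move=> s' t'; split.
    case=> u [hu ->]; move: hu; rewrite inE => /andP [/eqP es hu]; subst s'.
    have eu : u = ord_tuple (ar s).
      by apply: val_inj; apply: (inj_map val_inj); rewrite /= val_enum_ord; apply/eqP.
    congr Tagged; subst u; apply: val_inj => /=; exact: map_tnth_enum.
  move=> e; have /= es := congr1 tag e; subst s'.
  have et := eq_from_Tagged e; subst t'.
  exists (ord_tuple (ar s)); split.
    by rewrite inE eqxx /= val_enum_ord eqxx.
  by apply: val_inj => /=; rewrite map_tnth_enum.
have h6 : forall s' t', t' \in rels A s' <->
    (exists u, u \in rels (starS ar s) s' /\ t' = map_tuple gZ u) \/ t' \in R' s'.
  move=> s' t'; rewrite hstar /R' /remR inE; split.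
    move=> h; case: (eqVneq (Tagged (fun s => (ar s).-tuple 'I_(card A)) t') b0) => [e|ne].
      by left.
    by right; rewrite h /=; try exact: ne.
  case=> [e|/andP [] //].
  have /= es := congr1 tag e; subst s'.
  by have et := eq_from_Tagged e; subst t'.
have h7 : forall s' t', t' \in R' s' -> exists j, forall x, x \in (t' : seq _) -> x \in V j.
  move=> s' t' ht'; have ht'A : t' \in rels A s' by move: ht'; rewrite inE => /andP [].
  have a0 := ar_pos hnul ht'A.
  have yt : tnth t' (Ordinal a0) \in (t' : seq _) by exact: mem_tnth.
  have [j hj] := cov (tnth t' (Ordinal a0)); exists j => x xt.
  move: hj; rewrite !inE => hj; apply: connect_trans hj _.
  exact: (@fact_conn _ _ A' s' t').
have [gB HCG] := CG_part (Z := starS ar s) h1 h2 h3 h4 h5 h6 h7.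
apply: (@mkDen _ _ (inl (inr (Tagged (fun s => 'I_(ar s)) i))) A c _ gZ gB HCG).
  by rewrite /gZ /= ei.
move=> j.
apply: IH; last exact: (pieces_forest h2 h6 j hf).
apply: leq_ltn_trans (pieces_msr R' h2 j) _.
rewrite ltnS in hm; apply: leq_trans _ hm; rewrite /msr -addnS; apply: leq_add.
  by rewrite -[X in _ <= X]card_ord max_card.
apply: (sum_lt (s0 := s)).
  move=> s'; apply: subset_leq_card; apply/subsetP => u; rewrite inE => /andP [] //.
apply: proper_card; apply/properP; split.
  by apply/subsetP => u; rewrite inE => /andP [].
by exists t => //; rewrite inE eqxx andbF.
Qed.
End P7c.
Section P7d.
Variables (S : finType) (ar : S -> nat).
Local Notation struc := (struc ar).
Local Notation rstruc := (rstruc ar).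

Lemma only_c (A : struc) c v :
  (forall s (t : (ar s).-tuple 'I_(card A)), t \in rels A s -> c \notin (t : seq _)) ->
  connect (@inc_adj _ _ A) (inl c) (inl v) -> v = c.
Proof.
move=> hno /connectP [[|w p] /= hp e]; first by case: e.
move: hp => /andP []; case: w {e} => // [[s t]] /= /andP [ht hc].
by move: (hno _ _ ht); rewrite hc.
Qed.

Lemma dec_pt (A : struc) c :
  (forall s, ar s = 0 -> rels A s = set0) ->
  (forall x, connect (@inc_adj _ _ A) (inl c) (inl x)) ->
  (forall s (t : (ar s).-tuple 'I_(card A)), t \in rels A s -> c \notin (t : seq _)) ->
  exists t, Den t (@RStruc _ ar A c).
Proof.
move=> hnul hcon hno.
pose R' := fun s : S => (set0 : {set (ar s).-tuple 'I_(card A)}).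
pose gZ := fun _ : 'I_1 => c.
pose V := fun j : 'I_0 => (set0 : {set 'I_(card A)}).
pose r := fun j : 'I_0 => c.
pose att := fun j : 'I_0 => (None : option 'I_1).
have h1 : injective gZ by move=> x y _; rewrite (ord1 x) (ord1 y).
have h2 : forall j, r j \in V j by case.
have h3 : forall j k x, j != k -> x \in V j -> x \in V k -> False by case.
have h4 : forall j x z, x \in V j -> (x = gZ z <-> x = r j /\ att j = Some z) by case.
have h5 : forall v, (exists z, gZ z = v) \/ (exists j, v \in V j).
  by move=> v; left; exists ord0; rewrite /gZ (only_c hno (hcon v)).
have h6 : forall s t, t \in rels A s <->
    (exists u, u \in rels (ptS ar) s /\ t = map_tuple gZ u) \/ t \in R' s.
  move=> s t; split.
    2: by case=> [[u [h _]]|h]; rewrite in_set0 in h.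
  move=> ht; have a0 := ar_pos hnul ht.
  have yt : tnth t (Ordinal a0) \in (t : seq _) by exact: mem_tnth.
  by move: (hno _ _ ht); rewrite -{1}(only_c hno (hcon (tnth t (Ordinal a0)))) yt.
have h7 : forall s t, t \in R' s -> exists j, forall x, x \in (t : seq _) -> x \in V j.
  by move=> s t; rewrite in_set0.
have [gB HCG] := CG_part (Z := ptS ar) h1 h2 h3 h4 h5 h6 h7.
by apply: (@mkDen _ _ (inr true) A c _ gZ gB HCG) => // -[].
Qed.

Lemma decomp n : IHyp ar n.
Proof.
elim: n => [|n IH] A c //= hm hf.
case: (boolP [exists s, (ar s == 0) && (rels A s != set0)]).
  by case/existsP => s /andP [/eqP a0 hne]; exact: (dec_nul IH c hm hf a0 hne).
move/existsPn => hn.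
have hnul : forall s, ar s = 0 -> rels A s = set0.
  move=> s a0; move: (hn s) => /nandP [h|/negbNE/eqP //].
  by rewrite a0 eqxx in h.
case: (boolP ([set x | connect (@inc_adj _ _ A) (inl c) (inl x)] != setT)) => [hK|].
  apply: (dec_dis IH hm hf hnul). exact: hK.
move/negbNE/eqP => hK.
have hcon : forall x, connect (@inc_adj _ _ A) (inl c) (inl x).
  move=> x; have : x \in [set: 'I_(card A)] by rewrite in_setT.
  by rewrite -hK inE.
case: (boolP [exists s, [exists t in rels A s, c \in (t : seq _)]]).
  case/existsP => s /existsP [t /andP [ht hc]].
  exact: (dec_blk IH hm hf hnul hcon ht hc).
move/existsPn => hno; apply: dec_pt hnul hcon _ => s t ht.
by move: (hno s) => /existsPn /(_ t); rewrite ht.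
Qed.
End P7d.
Section P8.
Variables (S : finType) (ar : S -> nat).
Local Notation struc := (struc ar).
Local Notation rstruc := (rstruc ar).

Lemma ptr_forest : is_rforest (ptr ar).
Proof.
split; first by move=> s t; rewrite in_set0.
move=> [p [sz _ cp]]; case: p sz cp => [|u [|v p]] //= _ /andP [h _].
by case: u v h => [x|[s t]] [y|[s' t']] //=; rewrite /is_block /= in_set0.
Qed.

Lemma sum_forest (Y X : rstruc) E : is_sum Y X E -> is_forest E -> is_rforest X.
Proof.
move=> [fA [fB [[iA iB] _ _ _ fc]]]; apply: (@forest_ihom _ _ _ _ fB); split => // s u hu.
by apply/fc; right; exists u.
Qed.

Lemma sum_pt (A : struc) (c : 'I_(card A)) : is_sum (@RStruc _ ar A c) (ptr ar) A.
Proof.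
exists id, (fun _ => c); split => //=.
- by split => // x y; rewrite (ord1 x) (ord1 y).
- by move=> x y ->; rewrite (ord1 y).
- by move=> z; left; exists z.
- move=> s t; split; first by move=> h; left; exists t; split => //; apply: val_inj; rewrite /= map_id.
  case=> [[u [hu ->]]|[u [hu _]]]; last by rewrite in_set0 in hu.
  by have -> : map_tuple id u = u by apply: val_inj; rewrite /= map_id.
Qed.

Lemma iso_sym (A B : struc) : iso A B -> iso B A.
Proof.
move=> [f [[g fg gf] h]]; exists g; split; first by exists f.
move=> s t; rewrite h.
have -> : map_tuple f (map_tuple g t) = t.
  by apply: val_inj; rewrite /= -map_comp -[RHS]map_id; apply: eq_map => x; rewrite /= gf.
by [].
Qed.

Lemma sum_pt_iso (A : struc) (c : 'I_(card A)) C : is_sum (@RStruc _ ar A c) (ptr ar) C -> iso A C.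
Proof.
move=> [fA [fB [[iA iB] r ov cv fc]]].
have sur : forall z, exists x, fA x = z.
  move=> z; case: (cv z) => [//|[y <-]]; exists c; by rewrite r (ord1 y).
pose g z := proj1_sig (constructive_indefinite_description _ (sur z)).
have fg : forall z, fA (g z) = z by move=> z; rewrite /g; case: constructive_indefinite_description.
exists fA; split; first by exists g => // x; apply: iA; rewrite fg.
move=> s t; apply/idP/idP => [h|/fc].
  by apply/fc; left; exists t.
case=> [[u [hu /(congr1 val) /= /(inj_map iA) e]]|[u [hu _]]]; last by rewrite in_set0 in hu.
by have -> : t = u by apply: val_inj.
Qed.

Definition flag (A : struc) : {set S} := [set s | rels A s != set0].
Definition empS (f : {set S}) : struc := @Struc _ ar 0 (fun s => if s \in f then setT else set0).

Lemma iso_emp (A : struc) : card A = 0 -> iso A (empS (flag A)).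
Proof.
move=> c0; exists (cast_ord c0); split.
  by exists (cast_ord (esym c0)) => x; rewrite ?cast_ordK ?cast_ordKV.
move=> s t; rewrite /flag /= inE.
case: (eqVneq (ar s) 0) => [hs|hs].
  case: (boolP (rels A s != set0)) => [/set0Pn [w hw]|/negbNE/eqP ->]; last by rewrite !in_set0.
  by rewrite in_setT (tuple0_eq t w hs) hw.
exfalso; have hp : 0 < ar s by rewrite lt0n.
by case: (tnth t (Ordinal hp)) => m; rewrite c0.
Qed.

End P8.
Section P9.
Variables (S : finType) (ar : S -> nat).
Local Notation struc := (struc ar).
Local Notation rstruc := (rstruc ar).
Variable O : struc -> Prop.
Hypothesis Ofam : is_family O.
Variable n : nat.
Variable L : 'I_n.+1 -> rstruc -> Prop.
Hypothesis HL : forall Aa, is_rforest Aa -> exists i, forall Bb, residual O Aa Bb <-> L i Bb.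

Definition cls (Y : rstruc) : 'I_n.+1 := odflt ord0 [pick i | pb (forall X, residual O Y X <-> L i X)].

Lemma clsP Y : is_rforest Y -> forall X, residual O Y X <-> L (cls Y) X.
Proof.
move=> hY; rewrite /cls; case: pickP => [i /pbP //|h].
have [i hi] := HL hY; by move: (h i) => /pbP.
Qed.

Lemma SE_res Y X : (exists E, is_sum Y X E /\ O E) <-> residual O Y X.
Proof.
split; last by case.
move=> [E [hs hE]]; split; last by exists E.
exact: sum_forest hs (Ofam.1 _ hE).
Qed.

Lemma cls_SE Y Y' : is_rforest Y -> is_rforest Y' -> cls Y = cls Y' -> SE O Y Y'.
Proof. by move=> h h' e X; rewrite !SE_res (clsP h) (clsP h') e. Qed.

Lemma SE_cls Y Y' : SE O Y Y' -> cls Y = cls Y'.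
Proof.
move=> h; rewrite /cls; congr odflt; apply: eq_pick => i; apply: pb_eq.
by split => H X; rewrite -H -!SE_res h.
Qed.

Definition rep (i : 'I_n.+1) : rstruc :=
  epsilon (inhabits (ptr ar)) (fun Y => is_rforest Y /\ cls Y = i).

Lemma repP Y : is_rforest Y -> is_rforest (rep (cls Y)) /\ cls (rep (cls Y)) = cls Y.
Proof.
move=> h; have := @epsilon_spec _ (inhabits (ptr ar)) (fun Y' => is_rforest Y' /\ cls Y' = cls Y).
by apply; exists Y.
Qed.

Definition mkC (k : shape ar) (v : 'I_(snp (shape_of k)) -> 'I_n.+1) : rstruc :=
  @RStruc _ ar (@cgC _ _ (rs (sZ (shape_of k))) _ (fun j => rep (v j)) (@satt _ _ (shape_of k)))
    (cgZ (fun j => rep (v j)) (@satt _ _ (shape_of k)) (rroot (sZ (shape_of k)))).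

Definition trO := [ffun kv : {k : shape ar & {ffun 'I_(snp (shape_of k)) -> 'I_n.+1}} =>
  cls (mkC (fun j => tagged kv j))].

Fixpoint run (tr : {ffun {k : shape ar & {ffun 'I_(snp (shape_of k)) -> 'I_n.+1}} -> 'I_n.+1})
  (t : term ar) : 'I_n.+1 :=
  match t with Node k ts => tr (Tagged (fun k => {ffun 'I_(snp (shape_of k)) -> 'I_n.+1})
                                  [ffun j => run tr (ts j)]) end.

Lemma runP t : forall Y, Den t Y -> is_rforest Y -> run trO t = cls Y.
Proof.
elim: t => k ts IH Y [B [hB [gZ [gB [HC eY]]]]] hY.
have fB : forall j, is_rforest (B j).
  move=> j; apply: (@forest_ihom _ _ (rs (B j)) (rs Y) (fun x => gB j (val x))) => //; split.
    by move=> x y /(cg2 HC (ltn_ord x) (ltn_ord y)) e; apply: val_inj.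
  by move=> s u hu; apply/(cg6 HC); right; exists j, u.
rewrite /= ffunE /=.
apply: SE_cls; move: gZ gB HC eY hY; case: Y => C c /= gZ gB HC -> hY.
apply: (CG_cong (O := O) (rroot (sZ (shape_of k))) _ (CG_ex _ _) HC) => j.
rewrite ffunE (IH j _ (hB j) (fB j)).
have [h1 h2] := repP (fB j).
exact: cls_SE h1 (fB j) h2.
Qed.
End P9.
Section P10.
Variables (S : finType) (ar : S -> nat).
Local Notation struc := (struc ar).
Local Notation rstruc := (rstruc ar).
Local Notation Data n := ({ffun {set S} -> bool} * {ffun 'I_n.+1 -> bool} *
   {ffun {k : shape ar & {ffun 'I_(snp (shape_of k)) -> 'I_n.+1}} -> 'I_n.+1})%type.

Definition Fam (n : nat) (d : Data n) (A : struc) : Prop :=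
  (card A = 0 /\ d.1.1 (flag A)) \/
  (exists c : 'I_(card A), is_forest A /\ exists t, Den t (@RStruc _ ar A c) /\ d.1.2 (run d.2 t)).

Definition genF (k : nat) : struc -> Prop :=
  if @unpickle {n : nat & Data n} k is Some p then Fam (tagged p) else fun _ => False.

Lemma main_thm : forall O : struc -> Prop, is_family O -> regular O ->
  exists k : nat, forall A : struc, O A <-> genF k A.
Proof.
move=> O Ofam [m [L HL]].
case: m L HL => [|n] L HL.
  by have [[i hi] _] := HL _ (ptr_forest ar).
pose d : Data n := ([ffun f => pb (O (empS ar f))], [ffun i => pb (L i (ptr ar))], trO O L).
exists (pickle (Tagged (fun n => Data n) d)); rewrite /genF pickleK /= => A; split.
- move=> hO; have hf := Ofam.1 _ hO.
  case: (eqVneq (card A) 0) => [c0|c0].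
    left; split => //; rewrite /= ffunE; apply/pbP; exact: (Ofam.2 _ _ (iso_emp c0) hO).
  right; have hc : 0 < card A by rewrite lt0n.
  pose c := Ordinal hc; exists c; split => //.
  have [t ht] := @decomp _ ar (msr A).+1 A c (ltnSn _) hf.
  exists t; split => //; rewrite /= ffunE (runP Ofam HL ht hf); apply/pbP.
  apply/(clsP HL (Y := @RStruc _ ar A c) hf (ptr ar)); split; first exact: ptr_forest.
  by exists A; split => //; exact: sum_pt.
- case=> [[c0 hb]|[c [hf [t [hD hacc]]]]].
    move: hb; rewrite /= ffunE => /pbP h.
    exact: (Ofam.2 _ _ (iso_sym (iso_emp c0)) h).
  move: hacc; rewrite /= ffunE (runP Ofam HL hD hf) => /pbP /(clsP HL (Y := @RStruc _ ar A c) hf (ptr ar)) [_ [C [hs hC]]].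
  exact: (Ofam.2 _ _ (iso_sym (sum_pt_iso hs)) hC).
Qed.
End P10.

Theorem theorem3p6 (S : finType) (ar : S -> nat) :
  exists g : nat -> struc ar -> Prop,
    forall O : struc ar -> Prop, is_family O -> regular O ->
      exists k : nat, forall A : struc ar, O A <-> g k A.
Proof. exists (@genF S ar); exact: main_thm. Qed.
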